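(* Let $M$ be a finitely generated $\mathbb{Z}$-module and let $z:M\to M$ be an automorphism. Suppose that there is a sequence of integers $r_i\to\infty$ and automorphisms $w_i:M\to M$ satisfying $w_i^{r_i}=z$. Then $z$ has finite order in $\operatorname{Aut} M$. *)

(* Defs.v *)
From HB Require Import structures.
From mathcomp Require Import all_boot all_order all_algebra.
Set Implicit Arguments. Unset Strict Implicit. Unset Printing Implicit Defensive.
Import Order.TTheory GRing.Theory Num.Theory.
Local Open Scope ring_scope.

Definition fin_gen_Zmod (M : zmodType) : Prop :=
  exists s : seq M, forall x : M,
    exists c : nat -> int, x = \sum_(i < size s) s`_i *~ c i.

Definition Zmod_aut (M : zmodType) (f : M -> M) : Prop :=
  {morph f : x y / x + y} /\ bijective f.

Definition tends_to_infty (r : nat -> nat) : Prop :=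
  forall N : nat, exists i0 : nat, forall i : nat, (i0 <= i)%N -> (N <= r i)%N.

(* Main.v *)
Require Import Defs.
From mathcomp Require Import all_boot all_order all_algebra.
From HB Require Import structures.
From mathcomp Require Import all_field.
From mathcomp Require Import ring lra zify.
From Stdlib Require Import Classical.
Set Implicit Arguments. Unset Strict Implicit. Unset Printing Implicit Defensive.
Import Order.TTheory GRing.Theory Num.Theory.
Local Open Scope ring_scope.

Lemma list_bound (T : Type) (Q : T -> nat -> Prop) (l : seq T) :
  (forall t N N', (N <= N')%N -> Q t N -> Q t N') ->
  (forall t, List.In t l -> exists N, Q t N) ->
  exists N, forall t, List.In t l -> Q t N.
Proof.
move=> mono; elim: l => [|a l IH] H; first by exists 0%N.
have [Na Ha] := H a (or_introl erefl).
have [Nl Hl] := IH (fun t Ht => H t (or_intror Ht)).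
exists (maxn Na Nl) => t [<-|Ht].
  by apply: mono Ha; apply: leq_maxl.
by apply: mono (Hl t Ht); apply: leq_maxr.
Qed.

Lemma inf_pigeon (T : finType) (f : nat -> T) (P : nat -> Prop) (r : nat -> nat) :
  (forall N, exists i, P i /\ (N <= r i)%N) ->
  exists t, forall N, exists i, [/\ P i, (N <= r i)%N & f i = t].
Proof.
move=> H; apply: NNPP => Hn.
have H1 : forall t, exists N, forall i, P i -> (N <= r i)%N -> f i <> t.
  move=> t; apply: NNPP => Ht; apply: Hn; exists t => N; apply: NNPP => HN.
  apply: Ht; exists N => i Pi Ni fi; apply: HN; by exists i.
have [N HN] := @list_bound T (fun t N => forall i, P i -> (N <= r i)%N -> f i <> t)
  (enum T) (fun t N N' le h i Pi Ni => h i Pi (leq_trans le Ni)) (fun t _ => H1 t).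
have [i [Pi Ni]] := H N.
apply: (HN (f i) _ i Pi Ni erefl).
have : f i \in enum T by rewrite mem_enum.
elim: (enum T) => [//|a l IH]; rewrite inE => /orP [/eqP ->|/IH]; [left|right] => //.
Qed.

Lemma coef_prod_bound (R : numDomainType) (B : R) (s : seq R) k :
  0 <= B -> (forall a, a \in s -> `|a| <= B) ->
  `|(\prod_(a <- s) ('X - a%:P))`_k| <= (1 + B) ^+ size s.
Proof.
move=> B0; elim: s k => [|a s IH] k Hs.
  rewrite big_nil coefE expr0; case: (k == 0)%N; rewrite ?normr1 ?normr0 //.
have Hs' : forall b, b \in s -> `|b| <= B by move=> b bs; apply: Hs; rewrite inE bs orbT.
have Ha : `|a| <= B by apply: Hs; rewrite inE eqxx.
rewrite big_cons mulrBl coefB coefXM coefCM /= exprS.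
apply: (le_trans (ler_normB _ _)).
rewrite mulrDl mul1r; apply: lerD.
  case: (k == 0)%N; rewrite ?normr0 ?exprn_ge0 ?addr_ge0 //; exact: IH.
rewrite normrM; apply: ler_pM => //; exact: IH.
Qed.

Lemma poly_binom_id (R : comNzRingType) (c : R) (r : nat) :
  exists g : {poly R}, (c%:P + 'X)^+r = (c^+r)%:P + 'X * ((r%:R * c^+r.-1)%:P + 'X * g).
Proof.
elim: r => [|r [g IH]]; first by exists 0; rewrite !expr0 mulr0 addr0 mul0r polyC0 mulr0 addr0 polyC1.
exists (c%:P * g + (r%:R * c^+r.-1)%:P + 'X * g).
rewrite exprS IH /=.
have -> : (r.+1%:R * c ^+ r) = c * (r%:R * c^+r.-1) + c^+r.
  case: r {IH} => [|r]; first by rewrite /= expr0 mul0r mulr0 add0r mul1r.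
  rewrite -addn1 natrD exprS /=; ring.
rewrite !polyCM !polyCD exprS polyCM; ring.
Qed.

Section Basis.
Variable M : zmodType.
Implicit Types (b : seq M) (c : nat -> int).

Definition lin b c := \sum_(k < size b) b`_k *~ c k.
Definition indep b := forall c, lin b c = 0 -> forall k, (k < size b)%N -> c k = 0.
Definition spanb b y := exists c, lin b c = y.

Lemma lin_ext b c1 c2 : (forall k, (k < size b)%N -> c1 k = c2 k) -> lin b c1 = lin b c2.
Proof. by move=> H; apply: eq_bigr => k _; rewrite H. Qed.

Lemma linD b c1 c2 : lin b (fun k => c1 k + c2 k) = lin b c1 + lin b c2.
Proof. by rewrite /lin -big_split; apply: eq_bigr => k _; rewrite mulrzDr. Qed.

Lemma linN b c : lin b (fun k => - c k) = - lin b c.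
Proof. by rewrite /lin -sumrN; apply: eq_bigr => k _; rewrite mulrNz. Qed.

Lemma linZ b c z : lin b (fun k => c k * z) = lin b c *~ z.
Proof. by rewrite /lin mulrz_suml; apply: eq_bigr => k _; rewrite mulrzA. Qed.

Lemma lin0 b : lin b (fun _ => 0) = 0.
Proof. by rewrite /lin big1 // => k _; rewrite mulr0z. Qed.

Lemma spanD b y1 y2 : spanb b y1 -> spanb b y2 -> spanb b (y1 + y2).
Proof. by move=> [c1 <-] [c2 <-]; exists (fun k => c1 k + c2 k); rewrite linD. Qed.
Lemma spanN b y : spanb b y -> spanb b (- y).
Proof. by move=> [c <-]; exists (fun k => - c k); rewrite linN. Qed.
Lemma spanZ b y z : spanb b y -> spanb b (y *~ z).
Proof. by move=> [c <-]; exists (fun k => c k * z); rewrite linZ. Qed.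
Lemma spanMn b y n : spanb b y -> spanb b (y *+ n).
Proof. by move=> /(spanZ n); rewrite -pmulrn. Qed.
Lemma span0 b : spanb b 0.
Proof. by exists (fun _ => 0); rewrite lin0. Qed.
Lemma span_sum b n (F : 'I_n -> M) : (forall k, spanb b (F k)) -> spanb b (\sum_k F k).
Proof.
move=> H; elim/big_ind: _ => //; [exact: span0 | exact: spanD].
Qed.

Lemma lin_rcons b a c : lin (rcons b a) c = lin b c + a *~ c (size b).
Proof.
rewrite /lin size_rcons big_ord_recr /= nth_rcons ltnn eqxx; congr (_ + _).
by apply: eq_bigr => k _; rewrite nth_rcons ltn_ord.
Qed.

Lemma basis_exists (l : seq M) : exists b, indep b /\
  exists e, (0 < e)%N /\ forall y, y \in l -> spanb b (y *+ e).
Proof.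
elim: l => [|a l [b [Ib [e [e0 He]]]]].
  by exists [::]; split; [move=> c _ k // | exists 1%N].
have [Ib'|nIb'] := classic (indep (rcons b a)).
  exists (rcons b a); split => //; exists e; split => // y; rewrite inE => /orP [/eqP ->|yl].
    exists (fun k => if k == size b then e%:Z else 0); rewrite lin_rcons eqxx.
    rewrite (@lin_ext _ _ (fun _ => 0)) ?lin0 ?add0r //.
    by move=> k kb; rewrite (ltn_eqF kb).
  have [c Hc] := He y yl; exists (fun k => if (k < size b)%N then c k else 0).
  rewrite lin_rcons ltnn mulr0z addr0 -Hc; apply: lin_ext => k -> //.
have [c [Hc0 Hk]] : exists c, lin (rcons b a) c = 0 /\ c (size b) <> 0.
  apply: NNPP => H; apply: nIb' => c Hc k Hk.
  have cb0 : c (size b) = 0 by apply: NNPP => Hn; apply: H; exists c.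
  rewrite size_rcons ltnS leq_eqVlt in Hk; case/orP: Hk => [/eqP -> //| Hk].
  by apply: Ib Hk; move: Hc; rewrite lin_rcons cb0 mulr0z addr0.
set g := c (size b) in Hk.
have Sa : spanb b (a *~ g).
  exists (fun k => - c k); rewrite linN; apply/eqP; rewrite eq_sym -subr_eq0 opprK.
  by rewrite addrC -lin_rcons Hc0.
have Sa' : spanb b (a *+ `|g|%N).
  have [g0|g0] := lerP 0 g.
    by rewrite pmulrn abszE ger0_norm.
  by rewrite pmulrn abszE ltr0_norm // mulrNz; apply: spanN.
exists b; split => //; exists (`|g|%N * e)%N; split.
  by rewrite muln_gt0 e0 andbT absz_gt0; apply/eqP.
move=> y; rewrite inE => /orP [/eqP ->|yl]; first by rewrite mulrnA; apply: spanMn.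
by rewrite mulnC mulrnA; apply: spanMn; apply: He.
Qed.

End Basis.

Lemma mulmxMn (R : pzRingType) m n p (v : 'M[R]_(m, n)) (A : 'M_(n, p)) k :
  (v *+ k) *m A = (v *m A) *+ k.
Proof. by rewrite -!scaler_nat scalemxAl. Qed.

Section AddFun.
Variable M : zmodType.
Variable f : M -> M.
Hypothesis fA : {morph f : x y / x + y}.
Lemma fadd0 : f 0 = 0.
Proof. by have := fA 0 0; rewrite addr0 => /(congr1 (fun y => y - f 0)); rewrite subrr addrK. Qed.
Lemma faddN x : f (- x) = - f x.
Proof. by apply/eqP; rewrite -addr_eq0 -fA addNr fadd0. Qed.
Lemma faddB x y : f (x - y) = f x - f y.
Proof. by rewrite fA faddN. Qed.
Lemma faddMn x n : f (x *+ n) = f x *+ n.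
Proof. by elim: n => [|n IH]; rewrite ?mulr0n ?fadd0 // !mulrS fA IH. Qed.
Lemma faddMz x z : f (x *~ z) = f x *~ z.
Proof. by case: z => n; rewrite ?NegzE ?mulrNz ?faddN -!pmulrn faddMn. Qed.
Lemma fadd_sum n (F : 'I_n -> M) : f (\sum_k F k) = \sum_k f (F k).
Proof. by elim/big_rec2: _ => [|k y1 y2 _ <-]; rewrite ?fadd0 ?fA. Qed.
Lemma faddI n x : f (iter n f x) = iter n f (f x).
Proof. by elim: n => //= n ->. Qed.
Lemma iter_addA n : {morph iter n f : x y / x + y}.
Proof. by elim: n => [//|n IH] x y /=; rewrite IH fA. Qed.
End AddFun.

Section Coords.
Variable M : zmodType.
Variable b : seq M.
Hypothesis Ib : indep b.
Variable e : nat.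
Hypothesis e0 : (0 < e)%N.
Hypothesis He : forall x, spanb b (x *+ e).
Local Notation d := (size b).

Definition linv (v : 'rV[int]_d) : M := \sum_(k < d) b`_k *~ v 0 k.

Lemma linv_lin v : linv v = lin b (fun n => oapp (fun i => v 0 i) 0 (insub n)).
Proof. by apply: eq_bigr => k _; rewrite valK. Qed.

Lemma linvD v w : linv (v + w) = linv v + linv w.
Proof. by rewrite /linv -big_split; apply: eq_bigr => k _; rewrite mxE mulrzDr. Qed.
Lemma linvN v : linv (- v) = - linv v.
Proof. by rewrite /linv -sumrN; apply: eq_bigr => k _; rewrite mxE mulrNz. Qed.
Lemma linvZ z v : linv (z *: v) = linv v *~ z.
Proof. by rewrite /linv mulrz_suml; apply: eq_bigr => k _; rewrite mxE mulrC mulrzA. Qed.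
Lemma linv0 : linv 0 = 0.
Proof. by rewrite /linv big1 // => k _; rewrite mxE mulr0z. Qed.

Lemma linv_eq0 v : linv v = 0 -> v = 0.
Proof.
rewrite linv_lin => /Ib H; apply/rowP => k; rewrite mxE.
by have := H k (ltn_ord k); rewrite valK.
Qed.

Lemma linv_inj : injective linv.
Proof.
move=> v w H; apply/eqP; rewrite -subr_eq0; apply/eqP/linv_eq0.
by rewrite linvD linvN H subrr.
Qed.

Lemma ex_cf x : exists v, linv v == x *+ e.
Proof.
have [c Hc] := He x; exists (\row_(k < d) c k); apply/eqP; rewrite -Hc.
by apply: eq_bigr => k _; rewrite mxE.
Qed.

Definition cf x := xchoose (ex_cf x).
Lemma cfP x : linv (cf x) = x *+ e.
Proof. exact/eqP/(xchooseP (ex_cf x)). Qed.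

Lemma cfD x y : cf (x + y) = cf x + cf y.
Proof. by apply: linv_inj; rewrite linvD !cfP mulrnDl. Qed.
Lemma cfZ x z : cf (x *~ z) = z *: cf x.
Proof. by apply: linv_inj; rewrite linvZ !cfP !pmulrn mulrzAC. Qed.
Lemma cf0 : cf 0 = 0.
Proof. by apply: linv_inj; rewrite linv0 cfP mul0rn. Qed.
Lemma cfMn x n : cf (x *+ n) = cf x *+ n.
Proof. by rewrite pmulrn cfZ -scaler_nat natz. Qed.
Lemma cf_sum n (F : 'I_n -> M) : cf (\sum_k F k) = \sum_k cf (F k).
Proof. by elim/big_rec2: _ => [|k y1 y2 _ <-]; rewrite ?cf0 ?cfD. Qed.
Lemma cf_inj x y : cf x = cf y -> x *+ e = y *+ e.
Proof. by move=> H; rewrite -!cfP H. Qed.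

Definition matf (f : M -> M) : 'M[int]_d := \matrix_(j, k) cf (f b`_j) 0 k.

Lemma matfP f : {morph f : x y / x + y} -> forall x, cf (f x) *+ e = cf x *m matf f.
Proof.
move=> fA x.
have H1 : f (linv (cf x)) = f x *+ e by rewrite cfP faddMn.
rewrite -cfMn -H1 /linv (fadd_sum fA) cf_sum; apply/rowP => j.
rewrite !mxE summxE; apply: eq_bigr => k _.
by rewrite (faddMz fA) cfZ !mxE mulrC.
Qed.

Lemma matf_iter f : {morph f : x y / x + y} -> forall r x,
  cf (iter r f x) *+ (e ^ r) = cf x *m (matf f) ^+ r.
Proof.
move=> fA; elim=> [|r IH] x; first by rewrite expr0 mulmx1 expn0.
by rewrite /= expnS mulrnA matfP // -mulmxMn IH -mulmxA exprSr mulmxE.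
Qed.

Lemma mat_eq (A B : 'M[int]_d) : (forall x, cf x *m A = cf x *m B) -> A = B.
Proof.
move=> H; apply/matrixP => j k.
have Hb : cf b`_j = (delta_mx 0 j) *+ e.
  apply: linv_inj; rewrite cfP -scaler_nat natz linvZ pmulrn.
  congr (_ *~ _); rewrite /linv (bigD1 j) //= big1 ?addr0.
    by rewrite mxE !eqxx mulr1z.
  by move=> i ij; rewrite mxE (negbTE ij) andbF mulr0z.
have := congr1 (fun A : 'M[int]_(1, d) => A 0 k) (H b`_j); rewrite Hb !mulmxMn.
rewrite -!rowE -!scaler_nat !mxE.
by move/eqP; rewrite (inj_eq (mulfI _)) ?pnatr_eq0 -?lt0n // => /eqP.
Qed.

End Coords.

Section Tors.
Variable M : zmodType.
Variable s : seq M.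
Hypothesis gen : forall x : M, exists c : nat -> int, x = \sum_(i < size s) s`_i *~ c i.
Variable b : seq M.
Hypothesis Ib : indep b.
Variable e : nat.
Hypothesis e0 : (0 < e)%N.
Hypothesis He : forall x, spanb b (x *+ e).

Lemma tors_div (t y : M) : t *+ e = 0 -> t = y *+ e -> t = 0.
Proof.
move=> Ht Hy.
have H1 : linv (cf He y *+ e) = 0.
  by rewrite -scaler_nat natz linvZ cfP -Hy -pmulrn Ht.
have H2 : cf He y = 0.
  apply/rowP => k; have /rowP /(_ k) := linv_eq0 Ib H1.
  by rewrite -scaler_nat !mxE => /eqP; rewrite mulf_eq0 pnatr_eq0 (gtn_eqF e0) /= => /eqP.
by rewrite Hy -(cfP He) H2 linv0.
Qed.

Definition nS := size s.
Lemma ex_rep x : exists c : {ffun 'I_nS -> int}, x == \sum_(i < nS) s`_i *~ c i.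
Proof. by have [c Hc] := gen x; exists [ffun i : 'I_nS => c i]; apply/eqP; rewrite Hc; apply: eq_bigr => i _; rewrite ffunE. Qed.
Definition rep x := xchoose (ex_rep x).
Lemma repP x : x = \sum_(i < nS) s`_i *~ rep x i.
Proof. exact/eqP/(xchooseP (ex_rep x)). Qed.

Definition code x : {ffun 'I_nS -> 'I_e.+1} := [ffun i => inord (absz ((rep x i) %% e%:Z)%Z)].

Lemma code_inj (t1 t2 : M) : t1 *+ e = 0 -> t2 *+ e = 0 -> code t1 = code t2 -> t1 = t2.
Proof.
move=> H1 H2 Hc; apply/eqP; rewrite -subr_eq0; apply/eqP.
have ez : e%:Z != 0 by rewrite eqz_nat -lt0n.
have Hm : forall i, ((rep t1 i) %% e%:Z)%Z = ((rep t2 i) %% e%:Z)%Z.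
  move=> i; have := congr1 (fun f : {ffun 'I_nS -> 'I_e.+1} => nat_of_ord (f i)) Hc; rewrite !ffunE /=.
  have lt : forall z : int, (absz (z %% e%:Z)%Z < e.+1)%N.
    move=> z; apply: leq_trans (leqnSn _); rewrite -ltz_nat gez0_abs ?modz_ge0 //.
    by apply: ltz_pmod; rewrite ltz_nat.
  rewrite !inordK ?lt // => /(congr1 (fun n : nat => n%:Z)).
  by rewrite !gez0_abs ?modz_ge0.
apply: (@tors_div _ (\sum_(i < nS) s`_i *~ ((rep t1 i %/ e%:Z)%Z - (rep t2 i %/ e%:Z)%Z))).
  by rewrite mulrnBl H1 H2 subrr.
rewrite {1}[t1]repP {1}[t2]repP -sumrB -sumrMnl; apply: eq_bigr => i _.
rewrite -mulrzBr pmulrn -mulrzA; congr (_ *~ _).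
by rewrite {1}(divz_eq (rep t1 i) e%:Z) {1}(divz_eq (rep t2 i) e%:Z) Hm; ring.
Qed.

Variable g : M -> M.
Hypothesis gA : {morph g : x y / x + y}.
Hypothesis ginj : injective g.
Hypothesis Hg : forall x, (g x - x) *+ e = 0.

Lemma iter_inj n : injective (iter n g).
Proof. by elim: n => [|n IH] x y //= /ginj /IH. Qed.

Lemma gT (t : M) : t *+ e = 0 -> g t *+ e = 0.
Proof. by move=> H; rewrite -(faddMn gA) H fadd0. Qed.
Lemma iterT n (t : M) : t *+ e = 0 -> iter n g t *+ e = 0.
Proof. by elim: n => //= n IH /IH /gT. Qed.

Lemma period (t : M) : t *+ e = 0 -> exists p, (0 < p <= #|{ffun 'I_nS -> 'I_e.+1}|)%N /\ iter p g t = t.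
Proof.
move=> Ht; set C := #|{ffun 'I_nS -> 'I_e.+1}|.
have [j1 [j2 [Hj Hneq]]] : exists j1 j2 : 'I_C.+1, code (iter j1 g t) = code (iter j2 g t) /\ j1 <> j2.
  apply: NNPP => H.
  have inj : injective (fun j : 'I_C.+1 => code (iter j g t)).
    move=> j1 j2 Hj; apply: NNPP => Hn; apply: H; by exists j1, j2.
  by have := leq_card _ inj; rewrite card_ord ltnn.
have Heq := code_inj (iterT _ Ht) (iterT _ Ht) Hj.
wlog lt12 : j1 j2 Hj Hneq Heq / (j1 < j2)%N.
  move=> W; have [lt|gt|/val_inj eq] := ltngtP j1 j2; first exact: W lt.
    by apply: (W j2 j1) => //; move=> E; apply: Hneq.
  by [].
exists (j2 - j1)%N; split.
  rewrite subn_gt0 lt12 /=; apply: leq_trans (leq_subr _ _) _; rewrite -ltnS; exact: ltn_ord.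
apply: (@iter_inj j1); rewrite -iterD addnC subnK ?Heq //; exact: ltnW.
Qed.


Lemma tors_order : exists n, (0 < n)%N /\ forall x, iter n g x = x.
Proof.
set C := #|{ffun 'I_nS -> 'I_e.+1}|; set q := C`!.
have Hq : forall t : M, t *+ e = 0 -> iter q g t = t.
  move=> t Ht; have [p [/andP [p0 pC] Hp]] := period Ht.
  have /dvdnP [k ->] : (p %| q)%N by apply: dvdn_fact; rewrite p0.
  elim: k => [|k IH]; first by rewrite mul0n.
  by rewrite mulSn iterD IH Hp.
have HT : forall k (x : M), (iter k g x - x) *+ e = 0.
  move=> k x; elim: k => [|k IH]; first by rewrite subrr mul0rn.
  by rewrite /= -(subrK (iter k g x) (g _)) -addrA mulrnDl Hg IH addr0.
have Hk : forall k (x : M), iter (q * k) g x = x + (iter q g x - x) *+ k.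
  move=> k x; elim: k => [|k IH]; first by rewrite muln0 mulr0n addr0.
  rewrite mulnS iterD IH (iter_addA gA) (faddMn (iter_addA gA q)) (Hq _ (HT q x)).
  by rewrite mulrS addrA [x + _]addrC subrK.
exists (q * e)%N; split; first by rewrite muln_gt0 fact_gt0 e0.
by move=> x; rewrite Hk HT addr0.
Qed.

End Tors.

Lemma le_sum_seq (R : numDomainType) (s : seq R) x : x \in s -> `|x| <= \sum_(y <- s) `|y|.
Proof.
elim: s => [//|a s IH]; rewrite inE big_cons => /orP [/eqP ->|xs].
  by rewrite lerDl sumr_ge0.
by apply: le_trans (IH xs) _; rewrite lerDr.
Qed.

Lemma absz_shift (c : int) (K : nat) : `|c| <= K%:Z ->
  0 <= c + K%:Z /\ (absz (c + K%:Z)%R < (K + K).+1)%N.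
Proof.
move=> H; have [H1 H2] : - K%:Z <= c /\ c <= K%:Z by apply/andP; rewrite -ler_norml.
split; first by rewrite -lerBlDr sub0r.
by rewrite ltnS -lez_nat gez0_abs ?PoszD ?lerD // -lerBlDr sub0r.
Qed.

Lemma common_m (F : fieldType) (c : F) (s : seq F) :
  (forall a, a \in s -> exists2 k, (0 < k)%N & a ^+ k = c ^+ k) ->
  exists2 m, (0 < m)%N & forall a, a \in s -> a ^+ m = c ^+ m.
Proof.
elim: s => [|b s IH] H; first by exists 1%N.
have [k k0 Hk] := H b (mem_head _ _).
have [m m0 Hm] : exists2 m, (0 < m)%N & forall a, a \in s -> a ^+ m = c ^+ m by apply: IH => a As; apply: H; rewrite inE As orbT.
exists (k * m)%N; first by rewrite muln_gt0 k0.
move=> a; rewrite inE => /orP [/eqP ->|As]; first by rewrite exprM Hk -exprM.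
by rewrite mulnC exprM Hm // -exprM.
Qed.

Lemma dvd_prod (F : fieldType) (c : F) (m : nat) (s : seq F) :
  (forall a, a \in s -> a ^+ m = c) ->
  \prod_(a <- s) ('X - a%:P) %| ('X^m - c%:P) ^+ size s.
Proof.
elim: s => [|b s IH] H; first by rewrite big_nil dvd1p.
rewrite big_cons /= exprS; apply: dvdp_mul; last by apply: IH => a As; apply: H; rewrite inE As orbT.
by rewrite dvdp_XsubCl /root !hornerE H ?mem_head // subrr.
Qed.

Lemma pow_lin (R : comNzRingType) (a u x : R) k : exists h, (a + x * u) ^+ k = a ^+ k + x * h.
Proof.
elim: k => [|k [h IH]]; first by exists 0; rewrite !expr0 mulr0 addr0.
by exists (h * a + a ^+ k * u + x * h * u); rewrite exprS IH exprS; ring.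
Qed.

Lemma last_nz (P : nat -> bool) j n : (j <= n)%N -> P j -> ~~ P n ->
  exists k, [/\ (j <= k)%N, (k < n)%N, P k & ~~ P k.+1].
Proof.
elim: n => [|n IH] jn Pj Pn; first by move: jn Pj; rewrite leqn0 => /eqP ->; rewrite (negbTE Pn).
have jn' : (j <= n)%N.
  by rewrite leq_eqVlt in jn; case/orP: jn => [/eqP Hj|//]; move: Pj; rewrite Hj (negbTE Pn).
case Pn' : (P n); first by exists n; rewrite jn' Pn' ltnSn.
have [k [jk kn Pk Pk1]] := IH jn' Pj (negbT Pn'); exists k; split => //; exact: ltnW.
Qed.

Lemma scalemx_int_inj m1 m2 (a : int) (M1 M2 : 'M[int]_(m1, m2)) :
  a != 0 -> a *: M1 = a *: M2 -> M1 = M2.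
Proof.
move=> a0 H; apply/matrixP => i j; have := congr1 (fun M : 'M[int]_(m1, m2) => M i j) H.
by rewrite !mxE => /(mulfI a0).
Qed.

Section LinAlg.
Variable n : nat.
Local Notation d := n.+1.
Variables (Z : 'M[int]_d) (A : nat -> 'M[int]_d) (e : nat) (r : nat -> nat).
Hypothesis e0 : (0 < e)%N.
Hypothesis HA : forall i, (0 < r i)%N -> A i ^+ r i = (e ^ (r i).-1)%:R *: Z.
Hypothesis HG : forall i, exists G, A i *m G = (e ^ 2)%:R%:M.
Hypothesis Hr : forall N, exists i, (N <= r i)%N.

Local Notation toC := (map_mx (intr : int -> algC)).

Lemma eZ_bound : exists R : algC, 1 <= R /\ forall l, eigenvalue (toC Z) l -> `|l| <= R.
Proof.
have [rs Hrs] := closed_field_poly_normal (char_poly (toC Z)).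
exists (1 + \sum_(x <- rs) `|x|); split; first by rewrite lerDl sumr_ge0.
move=> l; rewrite eigenvalue_root_char Hrs (monicP (char_poly_monic _)) scale1r.
rewrite root_prod_XsubC => /le_sum_seq H; by apply: le_trans H _; rewrite lerDr ler01.
Qed.

Lemma eig_pow (m : nat) (B : 'M[algC]_d) (v : 'rV_d) a : v *m B = a *: v -> v *m B ^+ m = a ^+ m *: v.
Proof.
move=> H; elim: m => [|m IH]; first by rewrite !expr0 mulmx1 scale1r.
by rewrite exprSr -mulmxE mulmxA IH -scalemxAl H scalerA -exprSr.
Qed.

Lemma eig_nz i a : eigenvalue (toC (A i)) a -> a != 0.
Proof.
case/eigenvalueP => v Hv vnz; apply: contraNneq vnz => a0.
have [G HGi] := HG i.
have := congr1 (fun w => w *m toC G) Hv; rewrite -mulmxA -map_mxM HGi a0 scale0r mul0mx.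
rewrite map_scalar_mx mul_mx_scalar rmorph_nat => /eqP.
by rewrite scaler_eq0 pnatr_eq0 expn_eq0 (negbTE (lt0n_neq0 e0)).
Qed.

Lemma eig_Z i a : (0 < r i)%N -> eigenvalue (toC (A i)) a ->
  eigenvalue (toC Z) (a ^+ r i / (e ^ (r i).-1)%:R).
Proof.
move=> ri /eigenvalueP [v Hv vnz]; apply/eigenvalueP; exists v => //.
have := eig_pow (r i) Hv; rewrite -rmorphXn /= HA // map_mxZ /= -scalemxAr rmorph_nat => H.
by rewrite mulrC -scalerA -H scalerA mulVf ?scale1r // pnatr_eq0 expn_eq0 (negbTE (lt0n_neq0 e0)).
Qed.

Lemma root_bound R : 1 <= R -> (forall l, eigenvalue (toC Z) l -> `|l| <= R) ->
  forall i a, (0 < r i)%N -> root (char_poly (toC (A i))) a -> `|a| <= e%:R * R.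
Proof.
move=> R1 HR i a ri; rewrite -eigenvalue_root_char => Ha.
have := HR _ (eig_Z ri Ha); set c := (e ^ (r i).-1)%:R : algC.
have c0 : 0 < c by rewrite ltr0n expn_gt0 e0.
have R0 : 0 <= R by apply: le_trans R1.
rewrite normrM normfV (gtr0_norm c0) ler_pdivrMr // normrX => H.
rewrite -(ler_pXn2r ri) ?nnegrE ?mulr_ge0 ?ler0n ?normr_ge0 //.
apply: (le_trans H); rewrite [R * c]mulrC exprMn -natrX; apply: ler_pM => //.
  by rewrite /c ler_nat leq_pexp2l // leq_pred.
exact: ler_eXnr.
Qed.

Lemma coef_bound : exists K : nat, forall i, (0 < r i)%N ->
  forall k, `|(char_poly (A i))`_k| <= K%:Z.
Proof.
have [R [R1 HR]] := eZ_bound.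
have R0 : 0 <= R by apply: le_trans R1.
set B := (1 + e%:R * R) ^+ d.
have B0 : 0 <= B by rewrite exprn_ge0 // addr_ge0 // mulr_ge0.
exists (Num.Def.archi_bound B) => i ri k.
have [rs Hrs] := closed_field_poly_normal (char_poly (toC (A i))).
rewrite (monicP (char_poly_monic _)) scale1r in Hrs.
have Hroots : forall a, a \in rs -> `|a| <= e%:R * R.
  by move=> a ars; apply: (root_bound R1 HR ri); rewrite Hrs root_prod_XsubC.
have Hsz : size rs = d.
  by have := size_char_poly (toC (A i)); rewrite Hrs size_prod_XsubC => -[].
have := coef_prod_bound k (mulr_ge0 (ler0n _ e) R0) Hroots.
rewrite -Hrs Hsz -map_char_poly coef_map /= -intr_norm => H.
rewrite -(ler_int algC); apply: le_trans H _; apply: ltW; exact: archi_boundP.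
Qed.

Lemma ex_p : exists p : {poly int}, forall N, exists i,
  [/\ (0 < r i)%N, (N <= r i)%N & char_poly (A i) = p].
Proof.
have [K HK] := coef_bound.
pose code i : {ffun 'I_d.+1 -> 'I_(K + K).+1} :=
  [ffun k : 'I_d.+1 => inord (absz ((char_poly (A i))`_k + K%:Z))].
have [|t Ht] := @inf_pigeon _ code (fun i => (0 < r i)%N) r.
  by move=> N; have [i Hi] := Hr (maxn N 1); exists i; rewrite (leq_trans _ Hi) ?leq_maxr ?(leq_trans _ Hi) ?leq_maxl.
have [i0 [ri0 _ c0]] := Ht 0%N; exists (char_poly (A i0)) => N.
have [i [ri Ni ci]] := Ht N; exists i; split => //.
apply/polyP => k; case: (ltnP k d.+1) => kd; last first.
  by rewrite !nth_default // size_char_poly.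
have := congr1 (fun f : {ffun 'I_d.+1 -> 'I_(K + K).+1} => nat_of_ord (f (Ordinal kd))) (etrans ci (esym c0)).
have [Hi1 Hi2] := absz_shift (HK i ri k); have [Hj1 Hj2] := absz_shift (HK i0 ri0 k).
rewrite !ffunE /= !inordK // => /(congr1 (fun n : nat => n%:Z)).
by rewrite !gez0_abs // => /addIr.
Qed.

Lemma ex_pow (p : {poly int}) :
  (forall N, exists i, [/\ (0 < r i)%N, (N <= r i)%N & char_poly (A i) = p]) ->
  forall a : algC, root (map_poly (intr : int -> algC) p) a -> exists2 k, (0 < k)%N & a ^+ k = e%:R ^+ k.
Proof.
move=> Hp a Ha.
have Heig : forall i, char_poly (A i) = p -> eigenvalue (toC (A i)) a.
  by move=> i Hi; rewrite eigenvalue_root_char -map_char_poly Hi.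
have [rsZ HrsZ] := closed_field_poly_normal (char_poly (toC Z)).
rewrite (monicP (char_poly_monic _)) scale1r in HrsZ.
pose lam i := a ^+ r i / (e ^ (r i).-1)%:R.
have Hin : forall i, (0 < r i)%N -> char_poly (A i) = p -> lam i \in rsZ.
  move=> i ri ci; rewrite -root_prod_XsubC -HrsZ -eigenvalue_root_char.
  exact: eig_Z ri (Heig i ci).
pose code i : 'I_(size rsZ).+1 := inord (index (lam i) rsZ).
have [|t Ht] := @inf_pigeon _ code (fun i => (0 < r i)%N /\ char_poly (A i) = p) r.
  by move=> N; have [i [ri Ni ci]] := Hp N; exists i.
have [i1 [[r1 c1] _ t1]] := Ht 1%N.
have [i2 [[r2 c2] N2 t2]] := Ht (r i1).+1.
have Hl : lam i1 = lam i2.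
  have := congr1 (@nat_of_ord _) (etrans t1 (esym t2)); rewrite /code.
  have lt : forall i, (0 < r i)%N -> char_poly (A i) = p -> (index (lam i) rsZ < (size rsZ).+1)%N.
    by move=> i ri ci; rewrite ltnS; apply: ltnW; rewrite index_mem Hin.
  rewrite !inordK ?lt // => /(congr1 (nth 0 rsZ)).
  by rewrite !nth_index ?Hin.
have anz : a != 0 by apply: (eig_nz (i:=i1)); apply: Heig.
set k := (r i2 - r i1)%N.
have Hr2 : r i2 = (r i1 + k)%N by rewrite subnKC // ltnW.
have Hr2' : (r i2).-1 = ((r i1).-1 + k)%N by rewrite Hr2 -subn1 addnC -addnBA // addnC subn1.
exists k; first by rewrite subn_gt0.
have e0C : (e%:R : algC) != 0 by rewrite pnatr_eq0 -lt0n.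
move: Hl; rewrite /lam Hr2' Hr2 !natrX exprD [in X in _ = X]exprD invfM.
set u := a ^+ r i1; set E := e%:R ^+ (r i1).-1; set v := a ^+ k; set w := e%:R ^+ k.
have u0 : u != 0 by rewrite expf_neq0.
have E0 : E != 0 by rewrite expf_neq0.
have w0 : w != 0 by rewrite expf_neq0.
move=> H; have : u / E * (v / w) = u / E * 1 by rewrite mulr1 [RHS]H; ring.
move/(mulfI _); rewrite mulf_neq0 ?invr_eq0 // => /(_ isT) H2.
by rewrite -(divfK w0 v) H2 mul1r.
Qed.

Lemma nilp (p : {poly int}) (m : nat) :
  (forall a : algC, root (map_poly (intr : int -> algC) p) a -> a ^+ m = e%:R ^+ m) ->
  forall i, char_poly (A i) = p -> (A i ^+ m - ((e ^ m)%:R)%:M) ^+ d = 0.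
Proof.
move=> Hm i ci.
have [rs Hrs] := closed_field_poly_normal (char_poly (toC (A i))).
rewrite (monicP (char_poly_monic _)) scale1r in Hrs.
have Hsz : size rs = d.
  by have := size_char_poly (toC (A i)); rewrite Hrs size_prod_XsubC => -[].
have Hd := @dvd_prod _ (e%:R ^+ m) m rs.
have /dvdpP [q Hq] : char_poly (toC (A i)) %| ('X^m - (e%:R ^+ m)%:P) ^+ d.
  rewrite Hrs -Hsz; apply: Hd => a As; apply: Hm.
  by rewrite -map_char_poly ci in Hrs; rewrite Hrs root_prod_XsubC.
have := congr1 (horner_mx (toC (A i))) Hq.
rewrite rmorphM /= Cayley_Hamilton mulr0 rmorphXn rmorphB /= rmorphXn /= horner_mx_X horner_mx_C => H.
have H2 : toC ((A i ^+ m - ((e ^ m)%:R)%:M) ^+ d) = 0.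
  by rewrite rmorphXn rmorphB /= rmorphXn /= map_scalar_mx rmorph_nat natrX.
apply/matrixP => j k; have := congr1 (fun M : 'M[algC]_d => M j k) H2.
by rewrite !mxE => /eqP; rewrite intr_eq0 => /eqP.
Qed.

Lemma final (p : {poly int}) (m : nat) :
  (forall N, exists i, [/\ (0 < r i)%N, (N <= r i)%N & char_poly (A i) = p]) ->
  (forall i, char_poly (A i) = p -> (A i ^+ m - ((e ^ m)%:R)%:M) ^+ d = 0) ->
  Z ^+ m = ((e ^ m)%:R)%:M.
Proof.
move=> Hp Hnil.
set c : int := (e ^ m)%:R; set N' := Z ^+ m - c%:M.
pose Bd := (\max_(k : 'I_d) \max_(a : 'I_d) \max_(b : 'I_d) absz ((N' ^+ k) a b))%N.
have HBd : forall (k a b : 'I_d), (absz ((N' ^+ k) a b) <= Bd)%N.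
  move=> k a b; apply: leq_trans (leq_bigmax k); apply: leq_trans (leq_bigmax a).
  exact: (leq_bigmax b).
have [i [ri Ni ci]] := Hp Bd.+1.
set rr := r i in ri Ni.
set Y := A i ^+ m - c%:M.
have HY : Y ^+ d = 0 by exact: Hnil.
set E' : int := (e ^ (m * rr.-1))%:R.
have E'0 : E' != 0 by rewrite pnatr_eq0 expn_eq0 (negbTE (lt0n_neq0 e0)).
have H1 : (c%:M + Y) ^+ rr = E' *: Z ^+ m.
  rewrite /Y addrC subrK -exprM mulnC exprM HA // exprZn -natrX -expnM.
  by rewrite mulnC.
have [g Hg] := poly_binom_id c rr.
have Ha : c ^+ rr.-1 = E' by rewrite /E' /c -natrX -expnM.
have Hcr : c ^+ rr = E' * c by rewrite -Ha -exprSr prednK.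
have H2 := congr1 (horner_mx Y) Hg.
rewrite rmorphXn rmorphD /= horner_mx_C in H2.
rewrite (horner_mx_X Y) H1 rmorphD rmorphM /= horner_mx_C (horner_mx_X Y) in H2.
rewrite rmorphD /= horner_mx_C [horner_mx Y ('X * g)]rmorphM /= (horner_mx_X Y) Hcr Ha in H2.
case: (Y =P 0) => [Y0|Ynz].
  move: H2; rewrite Y0 !mul0r addr0 -scale_scalar_mx; exact: scalemx_int_inj.
exfalso.
have P1 : Y ^+ 1 != 0 by rewrite expr1; apply/eqP.
have Pd : ~~ (Y ^+ d != 0) by rewrite HY eqxx.
have [k [k1 kd Yk Yk1]] := @last_nz (fun k => Y ^+ k != 0) 1 d (ltn0Sn _) P1 Pd.
move/negPn/eqP: Yk1 => Yk1.
set a := rr%:R * E'.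
have Hq : E' *: N' = Y * (a%:M + Y * horner_mx Y g).
  by rewrite /N' scalerBr H2 scale_scalar_mx addrC addKr.
have [h Hh] := @pow_lin _ a%:P g 'X k.
have Hq' : horner_mx Y ('X * (a%:P + 'X * g)) = E' *: N'.
  rewrite Hq rmorphM /= (horner_mx_X Y) rmorphD /= horner_mx_C.
  by rewrite [horner_mx Y ('X * g)]rmorphM /= (horner_mx_X Y).
have Hpk : ('X * (a%:P + 'X * g)) ^+ k = (a%:P) ^+ k * 'X ^+ k + 'X ^+ k.+1 * h.
  by rewrite exprMn Hh exprS; ring.
have H3 : E' ^+ k *: N' ^+ k = (a ^+ k) *: Y ^+ k.
  rewrite -exprZn -Hq' -rmorphXn Hpk rmorphD /= [X in X + _]rmorphM [X in _ + X]rmorphM /= !rmorphXn /= horner_mx_C (horner_mx_X Y).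
  rewrite Yk1 mul0r addr0 -mulmxE -(rmorphXn (@scalar_mx int d)) /=.
  by rewrite mul_scalar_mx.
have H4 : N' ^+ k = (rr%:R ^+ k) *: Y ^+ k.
  apply: (@scalemx_int_inj _ _ (E' ^+ k)); first by rewrite expf_neq0.
  by rewrite H3 /a exprMn scalerA mulrC.
have [i0 [j0 nz]] : exists i0 j0, (Y ^+ k) i0 j0 != 0.
  apply: NNPP => Hn; move: Yk; rewrite /= => /eqP; apply; apply/matrixP => i0 j0.
  rewrite mxE; apply/eqP; apply: NNPP => H; apply: Hn; exists i0, j0; exact/negP.
have := HBd (Ordinal kd) i0 j0; rewrite /= H4 mxE abszM abszX natz absz_nat.
have H5 : (0 < absz ((Y ^+ k) i0 j0))%N by rewrite absz_gt0.
have H6 : (rr <= rr ^ k)%N by rewrite -{1}(expn1 rr) leq_pexp2l // ltnW.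
move=> H7; have := leq_trans (leq_trans H6 (leq_pmulr _ H5)) H7.
by rewrite leqNgt Ni.
Qed.


Lemma mat_main : exists2 m, (0 < m)%N & Z ^+ m = ((e ^ m)%:R)%:M.
Proof.
have [p Hp] := ex_p.
have [i0 [_ _ c0]] := Hp 0%N.
have [rs Hrs] := closed_field_poly_normal (char_poly (toC (A i0))).
rewrite (monicP (char_poly_monic _)) scale1r -map_char_poly c0 in Hrs.
have [m m0 Hm] : exists2 m, (0 < m)%N & forall a, a \in rs -> a ^+ m = (e%:R : algC) ^+ m.
  apply: common_m => a ars; apply: ex_pow => //; by rewrite Hrs root_prod_XsubC.
exists m => //; apply: (final Hp); apply: nilp => a; rewrite Hrs root_prod_XsubC; exact: Hm.
Qed.

End LinAlg.

Lemma mat_main_gen d (Z : 'M[int]_d) (A : nat -> 'M[int]_d) (e : nat) (r : nat -> nat) :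
  (0 < e)%N ->
  (forall i, (0 < r i)%N -> A i ^+ r i = (e ^ (r i).-1)%:R *: Z) ->
  (forall i, exists G, A i *m G = (e ^ 2)%:R%:M) ->
  (forall N, exists i, (N <= r i)%N) ->
  exists2 m, (0 < m)%N & Z ^+ m = ((e ^ m)%:R)%:M.
Proof.
case: d Z A => [|n] Z A e0 HA HG Hr; last exact: mat_main HA HG Hr.
by exists 1%N => //; apply/matrixP => [[]].
Qed.

Lemma cancel_mn (d : nat) (u v : 'rV[int]_d) k : (0 < k)%N -> u *+ k = v *+ k -> u = v.
Proof.
move=> k0 H; apply/rowP => j; have := congr1 (fun w : 'rV[int]_d => w 0 j) H.
rewrite -!scaler_nat !mxE => /(mulfI _); apply; by rewrite pnatr_eq0 -lt0n.
Qed.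

Lemma theorem3p9_aux (M : zmodType) (z : M -> M) (r : nat -> nat)
  (w : nat -> M -> M) :
  fin_gen_Zmod M ->
  Zmod_aut z ->
  tends_to_infty r ->
  (forall i, Zmod_aut (w i)) ->
  (forall i, iter (r i) (w i) =1 z) ->
  exists n : nat, (0 < n)%N /\ iter n z =1 id.
Proof.
move=> [s gen] [zA zbij] Hr Hw Hiter.
have gen' : forall x : M, exists c : nat -> int, x = \sum_(i < size s) s`_i *~ c i by [].
have [b [Ib [e [e0 Hs]]]] := basis_exists s.
have He : forall x, spanb b (x *+ e).
  move=> x; have [c ->] := gen x; rewrite -sumrMnl; apply: span_sum => i.
  rewrite pmulrn -mulrzA mulrC mulrzA -pmulrn; apply: spanZ; apply: Hs; exact: mem_nth.
set Z := matf He z.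
pose A i := matf He (w i).
have HA : forall i, (0 < r i)%N -> A i ^+ r i = (e ^ (r i).-1)%:R *: Z.
  move=> i ri; apply: (mat_eq Ib e0) => x.
  rewrite -(matf_iter Ib He (Hw i).1) Hiter -{1}(prednK ri) expnS mulrnA.
  by rewrite (matfP Ib He zA) -scalemxAr scaler_nat -mulmxMn.
have HG : forall i, exists G, A i *m G = (e ^ 2)%:R%:M.
  move=> i; have [wA [g wg gw]] := Hw i.
  have gA : {morph g : x y / x + y}.
    by move=> x y; apply: (can_inj wg); rewrite wA !gw.
  exists (matf He g); apply: (mat_eq Ib e0) => x.
  rewrite mulmxA -(matfP Ib He wA) mulmxMn -(matfP Ib He gA) wg -mulrnA mulnn.
  by rewrite mul_mx_scalar scaler_nat.
have Hr' : forall N, exists i, (N <= r i)%N.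
  by move=> N; have [i0 Hi0] := Hr N; exists i0; apply: Hi0.
have [m m0 Hm] := mat_main_gen e0 HA HG Hr'.
have Hz : forall x, (iter m z x - x) *+ e = 0.
  move=> x; apply/eqP; rewrite mulrnBl subr_eq0; apply/eqP; apply: (@cf_inj _ _ _ He).
  apply: (@cancel_mn _ _ _ (e ^ m)); first by rewrite expn_gt0 e0.
  by rewrite (matf_iter Ib He zA) -/Z Hm mul_mx_scalar scaler_nat.
have zinj : injective z by apply: bij_inj.
have [n [n0 Hn]] := tors_order gen Ib e0 He (iter_addA zA m) (@iter_inj _ _ zinj m) Hz.
exists (n * m)%N; split; first by rewrite muln_gt0 n0.
by move=> x; rewrite iterM Hn.
Qed.

Local Close Scope ring_scope.

Theorem theorem3p9 (M : zmodType) (z : M -> M) (r : nat -> nat)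
  (w : nat -> M -> M) :
  fin_gen_Zmod M ->
  Zmod_aut z ->
  tends_to_infty r ->
  (forall i, Zmod_aut (w i)) ->
  (forall i, iter (r i) (w i) =1 z) ->
  exists n : nat, (0 < n)%N /\ iter n z =1 id.
Proof. exact: theorem3p9_aux. Qed.
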